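(* Let $n\ge 3$ and let $C_n$ be the cycle with vertices $v_1,\dots,v_n$ and edges $v_1v_2,v_2v_3,\dots,v_{n-1}v_n,v_nv_1$. Then $P_{\{v_1\}}(C_n)=\tfrac34$.
   Context: Classical zero forcing: given a set of black vertices (the rest white), the color change rule turns a white vertex $v$ black if $v$ is the only white neighbor of some black vertex $u$. A set $S$ is a zero forcing set if starting with $S$ black, finitely many applications of this rule make all of $V(G)$ black. Probabilistic process: for a vertex $u$, $N(u)$ is its open neighborhood, $N[u]=N(u)\cup\{u\}$, $\deg(u)=|N(u)|$. Given a current black set $Z$, $F(u\to v)=0$ if $u\notin Z$, or $v\notin N(u)$, or $N[u]\subseteq Z$; otherwise $F(u\to v)=|N[u]\cap Z|/\deg(u)$. One global application of the probabilistic color change rule: black vertices stay black; independently for every pair $(u,v)$ with $u$ black and $v\in N(u)$ white, $u$ forces $v$ with probability $F(u\to v)$; a white vertex becomes black iff some black neighbor forces it. Starting with black set $A$ at step $0$ and applying this rule repeatedly, let $S^k$ be the set of colorings reachable with positive probability after exactly $k$ steps and $P^{(k)}$ the probability distribution on them. Let $T^k\subseteq S^k$ be the colorings whose black set contains a classical zero forcing set of $G$. Define $P_A(G)=P^{(k_0)}(T^{k_0})$ where $k_0$ is the least $k\ge 0$ with $T^k\neq\emptyset$. *)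

(* Defs.v *)
(* Probabilistic zero forcing on a finite simple graph,
   given as a relation e on a finType T (symmetric, irreflexive). *)
From HB Require Import structures.
From mathcomp Require Import all_boot all_order all_algebra.
Set Implicit Arguments. Unset Strict Implicit. Unset Printing Implicit Defensive.
Import GRing.Theory Num.Theory.
Local Open Scope ring_scope.

Definition nbhd (T : finType) (e : rel T) (u : T) : {set T} := [set v | e u v].
Definition deg (T : finType) (e : rel T) (u : T) : nat := #|nbhd e u|.
Definition cnbhd (T : finType) (e : rel T) (u : T) : {set T} := u |: nbhd e u.

Definition cc_step (T : finType) (e : rel T) (Z : {set T}) : {set T} :=
  Z :|: [set v | [exists u in Z, e u v && (nbhd e u :\: Z == [set v])]].

Definition zero_forcing_set (T : finType) (e : rel T) (S : {set T}) : Prop :=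
  exists k : nat, iter k (cc_step e) S = [set: T].

Definition contains_zfs (T : finType) (e : rel T) (Z : {set T}) : Prop :=
  exists S : {set T}, S \subset Z /\ zero_forcing_set e S.

Definition force_prob (T : finType) (e : rel T) (Z : {set T}) (u v : T) : rat :=
  if (u \in Z) && e u v && ~~ (cnbhd e u \subset Z)
  then (#|cnbhd e u :&: Z|)%:R / (deg e u)%:R
  else 0.

Definition not_forced (T : finType) (e : rel T) (Z : {set T}) (v : T) : rat :=
  \prod_(u in Z | e u v) (1 - force_prob e Z u v).

Definition trans (T : finType) (e : rel T) (Z Z' : {set T}) : rat :=
  if Z \subset Z' then
    \prod_(v in ~: Z) (if v \in Z' then 1 - not_forced e Z v else not_forced e Z v)
  else 0.

Fixpoint dist (T : finType) (e : rel T) (A : {set T}) (k : nat) (Z : {set T}) : rat :=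
  match k with
  | 0 => (Z == A)%:R
  | k'.+1 => \sum_(Y : {set T}) dist e A k' Y * trans e Y Z
  end.

Definition reachable (T : finType) (e : rel T) (A : {set T}) (k : nat) (Z : {set T}) : Prop :=
  0 < dist e A k Z.

(* P_A(G) = p : with k0 the least k for which T^k is nonempty,
   P^{(k0)}(T^{k0}) = p *)
Definition PA_eq (T : finType) (e : rel T) (A : {set T}) (p : rat) : Prop :=
  exists k0 : nat,
    (exists Z, reachable e A k0 Z /\ contains_zfs e Z) /\
    (forall k, (k < k0)%N -> forall Z, reachable e A k Z -> ~ contains_zfs e Z) /\
    (exists Tk : {set {set T}},
        (forall Z, Z \in Tk <-> (reachable e A k0 Z /\ contains_zfs e Z)) /\
        \sum_(Z in Tk) dist e A k0 Z = p).

(* the cycle C_n on vertices 'I_n (vertex v_i is the ordinal i-1):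
   i ~ j iff j = i+1 mod n or i = j+1 mod n *)
Definition cycle_graph (n : nat) : rel 'I_n :=
  fun i j => ((val j == (val i).+1 %% n) || (val i == (val j).+1 %% n))%N.
Arguments cycle_graph n : clear implicits.

(* Main.v *)
Require Import Defs.
From HB Require Import structures.
From mathcomp Require Import all_boot all_order all_algebra.
From mathcomp Require Import zify.
Import GRing.Theory Num.Theory.
Local Open Scope ring_scope.

Section S.
Variable n : nat.
Hypothesis hn : (3 <= n)%N.

Lemma modS (v : 'I_n) : (((nat_of_ord v)).+1 %% n = if ((nat_of_ord v)).+1 == n then 0 else ((nat_of_ord v)).+1)%N.
Proof. case: eqP => [->|h]; first by rewrite modnn. rewrite modn_small //. have := ltn_ord v. lia. Qed.

Lemma edgeE (u v : 'I_n) : cycle_graph n u v =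
  (((nat_of_ord v) == (if ((nat_of_ord u)).+1 == n then 0 else ((nat_of_ord u)).+1)) ||
   ((nat_of_ord u) == (if ((nat_of_ord v)).+1 == n then 0 else ((nat_of_ord v)).+1)))%N.
Proof. by rewrite /cycle_graph !modS. Qed.

Lemma step_lemma (Z : {set 'I_n}) (m i : 'I_n) : (nat_of_ord i) = ((nat_of_ord m)).+1 ->
  (forall j : 'I_n, ((nat_of_ord j) <= (nat_of_ord m))%N -> j \in Z) ->
  (i \in Z \/ (1 <= (nat_of_ord m))%N \/ (exists w : 'I_n, (nat_of_ord w) = n.-1 /\ w \in Z)) ->
  i \in cc_step (cycle_graph n) Z.
Proof.
move=> hi hZ hor; rewrite /cc_step inE.
apply/orP; have [iZ|iZ] := boolP (i \in Z); [by left | right].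
have hor' : ((1 <= (nat_of_ord m))%N \/ (exists w : 'I_n, (nat_of_ord w) = n.-1 /\ w \in Z)).
  by case: hor => [h|//]; rewrite h in iZ.
have ilt := ltn_ord i.
have ed : cycle_graph n m i.
  rewrite edgeE hi; have -> : ((nat_of_ord m).+1 == n) = false by apply/eqP; lia.
  by rewrite eqxx.
rewrite inE; apply/existsP; exists m; rewrite (hZ m (leqnn _)) ed /=.
apply/eqP/setP => x; rewrite !inE.
case: (eqVneq x i) => [->|xi]; first by rewrite (negbTE iZ) ed.
case ex: (cycle_graph n m x); rewrite ?andbF ?andbT //.
apply/negbF.
move: ex; rewrite edgeE.
have xlt := ltn_ord x.
have xi' : nat_of_ord x <> nat_of_ord i.
  move=> h; move: xi. have -> : x = i. apply: val_inj. exact h. by rewrite eqxx.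
have Em : ((nat_of_ord m).+1 == n) = false by apply/eqP; lia.
rewrite Em; case: (eqVneq (nat_of_ord x).+1 n) => hx /orP [] /eqP h3.
- lia.
- case: hor' => [|[w [hw wZ]]]; first lia.
  have -> : x = w. apply: val_inj. rewrite /= hw. lia. done.
- lia.
- apply: hZ; lia.
Qed.

Lemma iter_mono (S : {set 'I_n}) k : iter k (cc_step (cycle_graph n)) S \subset iter k.+1 (cc_step (cycle_graph n)) S.
Proof. by rewrite /= /cc_step subsetUl. Qed.

Lemma zfs_lemma (S : {set 'I_n}) (z : 'I_n) : nat_of_ord z = 0%N -> z \in S ->
  (exists w : 'I_n, (nat_of_ord w == 1%N) || (nat_of_ord w == n.-1) /\ w \in S) ->
  zero_forcing_set (cycle_graph n) S.
Proof.
move=> hz zS [w [hw wS]].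
have claim : forall k (j : 'I_n), (nat_of_ord j <= k)%N -> j \in iter k (cc_step (cycle_graph n)) S.
  elim=> [|k IH] j hj.
    have -> : j = z by apply: val_inj => /=; lia.
    done.
  case: (leqP (nat_of_ord j) k) => hjk.
    exact: (subsetP (iter_mono S k) _ (IH j hjk)).
  have kn : (k < n)%N by have := ltn_ord j; lia.
  apply: (@step_lemma _ (Ordinal kn)) => //=.
  - lia.
  - case: (posnP k) => hk; [ | by right; left].
    case/orP: hw => /eqP hw.
      left. have -> : j = w by apply: val_inj => /=; lia.
      rewrite hk /=. done.
    right; right; exists w; split => //. rewrite hk. done.
exists n.-1; apply/setP => j; rewrite inE; apply: claim.
have := ltn_ord j; lia.
Qed.

Variables v1 a b : 'I_n.
Hypotheses (h1 : nat_of_ord v1 = 0%N) (ha : nat_of_ord a = 1%N) (hb : nat_of_ord b = n.-1).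
Let e := cycle_graph n.

Lemma va : (v1 == a) = false. Proof. by apply/eqP => /(congr1 (@nat_of_ord _)); lia. Qed.
Lemma vb : (v1 == b) = false. Proof. by apply/eqP => /(congr1 (@nat_of_ord _)); lia. Qed.
Lemma ab : (a == b) = false. Proof. by apply/eqP => /(congr1 (@nat_of_ord _)); lia. Qed.
Lemma av : (a == v1) = false. Proof. by rewrite eq_sym va. Qed.
Lemma bv : (b == v1) = false. Proof. by rewrite eq_sym vb. Qed.
Lemma ba : (b == a) = false. Proof. by rewrite eq_sym ab. Qed.

Lemma edge1 (v : 'I_n) : e v1 v = (v \in [set a; b]).
Proof.
rewrite /e edgeE h1 !inE.
have -> : (1 == n) = false by apply/eqP; lia.
have E1 : (v == a) = (nat_of_ord v == 1%N) by rewrite -val_eqE /= ha.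
have E2 : (v == b) = (nat_of_ord v == n.-1) by rewrite -val_eqE /= hb.
rewrite E1 E2; have := ltn_ord v.
case: (eqVneq (nat_of_ord v).+1 n) => hx /= hv.
- have -> : (nat_of_ord v == n.-1) by apply/eqP; lia.
  by rewrite orbT.
- have -> : (nat_of_ord v == n.-1) = false by apply/eqP; lia.
  by rewrite orbF.
Qed.

Lemma nbhd1 : nbhd e v1 = [set a; b].
Proof. by apply/setP => v; rewrite /nbhd inE edge1. Qed.

Lemma deg1 : deg e v1 = 2%N.
Proof. by rewrite /deg nbhd1 cards2 ab. Qed.

Lemma nf1 (v : 'I_n) : not_forced e [set v1] v = if v \in [set a; b] then 1/2 else 1.
Proof.
rewrite /not_forced big_mkcondr big_set1 edge1.
case: ifP => // vab.
rewrite /force_prob set11 edge1 vab /=.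
have -> : cnbhd e v1 \subset [set v1] = false.
  apply/negbTE/negP => /subsetP /(_ a).
  by rewrite /cnbhd nbhd1 !inE eqxx av orbT => /(_ isT).
rewrite /= deg1.
have -> : cnbhd e v1 :&: [set v1] = [set v1].
  by apply/setIidPr; rewrite sub1set /cnbhd !inE eqxx.
rewrite cards1. by [].
Qed.

Lemma dist1 (Z : {set 'I_n}) : dist e [set v1] 1 Z =
  if (v1 \in Z) && (Z \subset [set v1; a; b]) then 1/4 else 0.
Proof.
rewrite /= (bigD1 [set v1]) //= eqxx mul1r big1 ?addr0; last first.
  by move=> Y /negbTE ->; rewrite mul0r.
rewrite /trans sub1set.
case v1Z: (v1 \in Z) => //=.
rewrite (eq_bigr (fun v => if v \in [set a; b] then 1/2 else if v \in Z then 0 else 1)); last first.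
  move=> v _; rewrite nf1; case: ifP => _; case: ifP => //.
rewrite mul1r (bigD1 a); last by rewrite !inE av.
rewrite (bigD1 b); last by rewrite !inE bv ba.
rewrite !inE !eqxx orbT /=.
case: ifP => sub.
  rewrite big1 ?mulr1 //.
  move=> v /andP [/andP [vv1 va'] vb'].
  rewrite !inE in vv1.
  rewrite !inE (negbTE va') (negbTE vb') /=.
  case: ifP => // vZ.
  by have := subsetP sub v vZ; rewrite !inE (negbTE vv1) (negbTE va') (negbTE vb').
have /subsetPn [v vZ vn] := negbT sub.
move: vn; rewrite !inE negb_or negb_or; case/andP => /andP [vv1 va'] vb'.
rewrite (bigD1 v); last by rewrite !inE vv1 va' vb'.
by rewrite /= !inE (negbTE va') (negbTE vb') vZ /= !mul0r !mulr0.
Qed.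

Lemma nonzfs : ~ contains_zfs e [set v1].
Proof.
move=> [S [sS [k hk]]].
have fix1 : cc_step e S = S.
  apply/setP => x; rewrite /cc_step inE.
  apply/idP/idP => [/orP [//|] | ->//].
  rewrite inE => /existsP [u /andP [uS /andP [_ /eqP hN]]].
  have uv : u = v1 by apply/set1P; exact: (subsetP sS).
  move: hN; rewrite uv nbhd1 => hN.
  have aS : a \notin S by apply/negP => aS; have := subsetP sS a aS; rewrite inE av.
  have bS : b \notin S by apply/negP => bS; have := subsetP sS b bS; rewrite inE bv.
  have : a \in [set x] by rewrite -hN !inE eqxx aS.
  have : b \in [set x] by rewrite -hN !inE eqxx orbT bS.
  by rewrite !inE => /eqP bx /eqP ax; move: ab; rewrite ax bx eqxx.
have : iter k (cc_step e) S = S by elim: k {hk} => //= k ->.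
rewrite hk => hS.
have : a \in S by rewrite -hS inE.
by move=> aS; have := subsetP sS a aS; rewrite inE av.
Qed.

Lemma mainsec : PA_eq e [set v1] (3%:R / 4%:R).
Proof.
have zfsa : forall Z : {set 'I_n}, v1 \in Z -> (a \in Z) || (b \in Z) -> contains_zfs e Z.
  move=> Z v1Z abZ; exists Z; split => //.
  apply: (@zfs_lemma Z v1) => //.
  by case/orP: abZ => ?; [exists a | exists b]; rewrite ?ha ?hb eqxx ?orbT.
have d1 : forall Z : {set 'I_n}, v1 \in Z -> Z \subset [set v1; a; b] -> dist e [set v1] 1 Z = 1/4.
  by move=> Z h h'; rewrite dist1 h h'.
exists 1%N; split; [|split].
- exists [set v1; a]; split.
    by rewrite /reachable d1 // ?inE ?eqxx //; apply/subsetP => x; rewrite !inE => /orP [] ->; rewrite ?orbT.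
  by apply: zfsa; rewrite !inE eqxx ?orbT.
- case=> // _ Z; rewrite /reachable /= ltr0n lt0b => /eqP ->; exact: nonzfs.
- exists [set [set v1; a]; [set v1; b]; [set v1; a; b]]; split.
  + move=> Z; split.
      rewrite !inE => /orP [/orP [] | ] /eqP ->; (split; [rewrite /reachable d1 //; try (apply/subsetP => x; rewrite !inE; by case: (x == v1); case: (x == a); case: (x == b)) | apply: zfsa]); by rewrite !inE ?eqxx ?orbT.
    move=> [hr hz]; move: hr; rewrite /reachable dist1.
    case: ifP => [/andP [v1Z sub] _|]; last by rewrite Order.POrderTheory.ltxx.
    have HZ : forall x, (x \in Z) = [|| x == v1, (x == a) && (a \in Z) | (x == b) && (b \in Z)].
      move=> x; apply/idP/idP => [xZ|].
        have := subsetP sub x xZ; rewrite !inE.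
        by case/orP => [/orP [] |] /eqP ex; rewrite ex eqxx ?xZ ?orbT //; rewrite -ex xZ ?orbT.
      by case/orP => [/eqP ->//|/orP [/andP [/eqP -> //]|/andP [/eqP -> //]]].
    rewrite !inE; case aZ: (a \in Z); case bZ: (b \in Z).
    * apply/orP; right; apply/eqP/setP => x; rewrite HZ aZ bZ !inE !andbT; by case: (x == v1); case: (x == a); case: (x == b).
    * apply/orP; left; apply/orP; left; apply/eqP/setP => x; rewrite HZ aZ bZ !inE !andbT !andbF; by case: (x == v1); case: (x == a); case: (x == b).
    * apply/orP; left; apply/orP; right; apply/eqP/setP => x; rewrite HZ aZ bZ !inE !andbT !andbF; by case: (x == v1); case: (x == a); case: (x == b).
    * exfalso; apply: nonzfs; have <- // : Z = [set v1].
      by apply/setP => x; rewrite HZ aZ bZ !inE !andbF !orbF.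
  + have n12 : [set v1; a] != [set v1; b].
      apply/negP => /eqP /setP /(_ b); by rewrite !inE eqxx bv ba orbT.
    have n13 : [set v1; a] != [set v1; a; b].
      apply/negP => /eqP /setP /(_ b); by rewrite !inE eqxx bv ba orbT.
    have n23 : [set v1; b] != [set v1; a; b].
      apply/negP => /eqP /setP /(_ a); by rewrite !inE eqxx av ab orbT.
    rewrite (bigD1 [set v1; a]); last by rewrite !inE eqxx.
    rewrite (bigD1 [set v1; b]); last by apply/andP; split; [rewrite !inE eqxx orbT | rewrite eq_sym]...
    rewrite (big_pred1 [set v1; a; b]); last first.
      move=> x /=; rewrite !inE.
      case: (eqVneq x [set v1; a]) => [->|_]; first by rewrite andbF (negbTE n13).
      case: (eqVneq x [set v1; b]) => [->|_]; first by rewrite andbF (negbTE n23).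
      by case: (x == [set v1; a; b]).
    rewrite !d1 //; try (apply/subsetP => x; rewrite !inE; by case: (x == v1); case: (x == a); case: (x == b)).
    all: by rewrite ?inE ?eqxx ?orbT.
Qed.
End S.

Theorem mainTheorem3 (n : nat) (hn : (3 <= n)%N) (v1 : 'I_n) (hv1 : val v1 = 0%N) :
  PA_eq (cycle_graph n) [set v1] (3%:R / 4%:R).
Proof.
have h1 : (1 < n)%N by lia.
have h2 : (n.-1 < n)%N by lia.
exact: (@mainsec n hn v1 (Ordinal h1) (Ordinal h2) hv1 erefl erefl).
Qed.
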